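(* Let $m\in\mathbb{Z}_{>0}$, let $V$ be an irreducible $\mathcal{G}^{(m,0)}$-module, and suppose there is an odd integer $k\ge m-1$ such that $L_{k+j}v=H_{k+j}v=I_{k+j}v=J_{k+j}v=0$ for all $v\in V$, $j\in\mathbb{Z}_{>0}$, and $I_{k-i}v=\alpha_{k-i}v$, $J_{k-i}v=\beta_{k-i}v$ for all $v\in V$, $0\le i\le m-1$, with $\alpha_{k-i},\beta_{k-i}\in\mathbb{C}$ and $\alpha_k\beta_k\neq0$. Let $V_0=\mathrm{Ind}_{\mathcal{G}^{(m,0)}}^{\mathcal{G}_0}V$, let $v\in V_0\setminus V$ (where $V$ is identified with $1\otimes V$) and let $\deg(v)=(\mathbf{h},\mathbf{l})$. Then: (1) If $\mathbf{h}\ne\mathbf{0}$ and $r=\min\{i:h_i\ne0\}$, then $\deg\big((I_{k-r}-\alpha_{k-r})v\big)=(\mathbf{h}-\epsilon_r,\mathbf{l})$. (2) If $\mathbf{h}=\mathbf{0}$, $\mathbf{l}\ne\mathbf{0}$ and $s=\max\{i:l_i\ne0\}$, then $\deg\big((I_{k-s}-\alpha_{k-s})v\big)=(\mathbf{0},\mathbf{l}-\epsilon_s)$ or $\deg\big((J_{k-s}-\beta_{k-s})v\big)=(\mathbf{0},\mathbf{l}-\epsilon_s)$.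
   Context: $\mathcal{G}$ is the complex Lie algebra with basis $\{L_n,H_n,I_n,J_n,\mathbf{c}_1,\mathbf{c}_2,\mathbf{c}_3: n\in\mathbb{Z}\}$ whose brackets of basis elements are $[L_m,L_n]=(n-m)L_{m+n}+\frac{m^3-m}{12}\delta_{m+n,0}\mathbf{c}_1$, $[L_m,H_n]=nH_{m+n}+m^2\delta_{m+n,0}\mathbf{c}_2$, $[H_m,H_n]=m\delta_{m+n,0}\mathbf{c}_3$, $[L_m,I_n]=(n-m)I_{m+n}$, $[L_m,J_n]=(n-m)J_{m+n}$, $[H_m,I_n]=I_{m+n}$, $[H_m,J_n]=-J_{m+n}$ (and antisymmetric counterparts), all other brackets of basis elements zero. $\mathcal{G}^{(m,0)}=\sum_{i\ge0}(\mathbb{C}L_{m+i}+\mathbb{C}H_{m+i}+\mathbb{C}I_{i}+\mathbb{C}J_{i})+\sum_{k=1}^3\mathbb{C}\mathbf{c}_k$, $\mathcal{G}_0=\sum_{i\ge0}(\mathbb{C}L_{i}+\mathbb{C}H_{i}+\mathbb{C}I_{i}+\mathbb{C}J_{i})+\sum_{k=1}^3\mathbb{C}\mathbf{c}_k$, and $V_0=\mathcal{U}(\mathcal{G}_0)\otimes_{\mathcal{U}(\mathcal{G}^{(m,0)})}V$. Orders and degree: elements of $\mathbb{N}^m$ are written $\mathbf{i}=(i_{m-1},\dots,i_1,i_0)$; $\epsilon_k$ has $1$ in the position of index $k$ and $0$ elsewhere; $\mathbf{w}(\mathbf{i})=\sum_{k=0}^{m-1}(m-k)i_k$. On $\mathbb{N}^m$,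 $\mathbf{i}\succ\mathbf{j}$ iff there is $k$ with $i_k>j_k$ and $i_s=j_s$ for all $s<k$. On $\mathbb{N}^m\times\mathbb{N}^m$, $(\mathbf{h},\mathbf{l})\succ(\mathbf{h}',\mathbf{l}')$ iff either $\mathbf{w}(\mathbf{h})+\mathbf{w}(\mathbf{l})>\mathbf{w}(\mathbf{h}')+\mathbf{w}(\mathbf{l}')$, or these weights are equal and $\mathbf{l}\succ\mathbf{l}'$, or the weights are equal, $\mathbf{l}=\mathbf{l}'$ and $\mathbf{h}\succ\mathbf{h}'$. Set $H^{\mathbf{h}}L^{\mathbf{l}}=H_{m-1}^{h_{m-1}}\cdots H_0^{h_0}L_{m-1}^{l_{m-1}}\cdots L_0^{l_0}$. By PBW every $v\in V_0$ is uniquely $\sum_{\mathbf{h},\mathbf{l}}H^{\mathbf{h}}L^{\mathbf{l}}v_{\mathbf{h},\mathbf{l}}$ with $v_{\mathbf{h},\mathbf{l}}\in V$, finitely many nonzero; for $v\neq0$, $\deg(v)$ is the $\succ$-maximal $(\mathbf{h},\mathbf{l})$ with $v_{\mathbf{h},\mathbf{l}}\ne0$. *)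

(* Defs.v *)
From HB Require Import structures.
From mathcomp Require Import all_boot all_order all_algebra reals.
From mathcomp.real_closed Require Export complex.
Set Implicit Arguments.
Unset Strict Implicit.
Unset Printing Implicit Defensive.
Import GRing.Theory Num.Theory.
Local Open Scope ring_scope.

(* G^{(a,0)} is spanned by L_{a+i}, H_{a+i} (i >= 0), I_i, J_i (i>=0),  *)
(* c_1, c_2, c_3.  A representation on W is given by the operators      *)
(* assigned to these basis elements:                                    *)
(*    opL i = rho(L_{a+i}),  opH i = rho(H_{a+i}),                      *)
(*    opI i = rho(I_i),      opJ i = rho(J_i),   opc_k = rho(c_k),      *)
(* which must be linear and satisfy the bracket relations of G          *)
(* (with [x,y] acting as the commutator).  G^{(0,0)} is G_0.            *)

Section Rep.
Variable K : fieldType.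

Definition linmap (U U' : lmodType K) (f : U -> U') :=
  forall (a : K) (x y : U), f (a *: x + y) = a *: f x + f y.

Variable W : lmodType K.

Definition comm (f g : W -> W) (x : W) : W := f (g x) - g (f x).

Record GRep := {
  opL : nat -> W -> W;
  opH : nat -> W -> W;
  opI : nat -> W -> W;
  opJ : nat -> W -> W;
  opc1 : W -> W;
  opc2 : W -> W;
  opc3 : W -> W }.

Definition delta0 (p q : nat) : K := if (p + q == 0)%N then 1 else 0.

Definition central_op (a : nat) (rho : GRep) (f : W -> W) : Prop :=
  forall (i : nat) (x : W),
  [/\ comm f (opL rho i) x = 0, comm f (opH rho i) x = 0,
      comm f (opI rho i) x = 0, comm f (opJ rho i) x = 0
    & [/\ comm f (opc1 rho) x = 0, comm f (opc2 rho) x = 0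
        & comm f (opc3 rho) x = 0]].

(* rho is a representation of G^{(a,0)}.  Here p = a+i, q = a+j are the  *)
(* actual indices of L_p, H_p, L_q, H_q, and L_{p+q} = opL (a+i+j).      *)
Record is_Grep (a : nat) (rho : GRep) : Prop := {
  lin_L : forall i, linmap (opL rho i);
  lin_H : forall i, linmap (opH rho i);
  lin_I : forall i, linmap (opI rho i);
  lin_J : forall i, linmap (opJ rho i);
  lin_c1 : linmap (opc1 rho);
  lin_c2 : linmap (opc2 rho);
  lin_c3 : linmap (opc3 rho);
  br_LL : forall i j x,
    comm (opL rho i) (opL rho j) x =
      (((a + j)%:R - (a + i)%:R) : K) *: opL rho (a + i + j) x
      + (delta0 (a + i) (a + j) * (((a + i)%:R ^+ 3 - (a + i)%:R) / 12%:R))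
          *: opc1 rho x;
  br_LH : forall i j x,
    comm (opL rho i) (opH rho j) x =
      ((a + j)%:R : K) *: opH rho (a + i + j) x
      + (delta0 (a + i) (a + j) * (a + i)%:R ^+ 2) *: opc2 rho x;
  br_HH : forall i j x,
    comm (opH rho i) (opH rho j) x =
      (delta0 (a + i) (a + j) * (a + i)%:R) *: opc3 rho x;
  br_LI : forall i j x,
    comm (opL rho i) (opI rho j) x =
      ((j%:R - (a + i)%:R) : K) *: opI rho (a + i + j) x;
  br_LJ : forall i j x,
    comm (opL rho i) (opJ rho j) x =
      ((j%:R - (a + i)%:R) : K) *: opJ rho (a + i + j) x;
  br_HI : forall i j x, comm (opH rho i) (opI rho j) x = opI rho (a + i + j) x;
  br_HJ : forall i j x, comm (opH rho i) (opJ rho j) x = - opJ rho (a + i + j) x;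
  br_II : forall i j x, comm (opI rho i) (opI rho j) x = 0;
  br_IJ : forall i j x, comm (opI rho i) (opJ rho j) x = 0;
  br_JJ : forall i j x, comm (opJ rho i) (opJ rho j) x = 0;
  cen_c1 : central_op a rho (opc1 rho);
  cen_c2 : central_op a rho (opc2 rho);
  cen_c3 : central_op a rho (opc3 rho) }.

Definition irreducible (rho : GRep) : Prop :=
  (exists x : W, x != 0) /\
  forall P : W -> Prop,
    P 0 ->
    (forall (c : K) x y, P x -> P y -> P (c *: x + y)) ->
    (forall i x, P x ->
       [/\ P (opL rho i x), P (opH rho i x), P (opI rho i x) & P (opJ rho i x)]) ->
    (forall x, P x -> [/\ P (opc1 rho x), P (opc2 rho x) & P (opc3 rho x)]) ->
    (forall x, P x -> x = 0) \/ (forall x, P x).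

End Rep.

Arguments GRep : clear implicits.

(* Module homomorphism from a G^{(a,0)}-rep (on U) to a G^{(b,0)}-rep     *)
(* (on U'), b + d = a, restricted to G^{(a,0)}: L_{a+i} = opL rho' (d+i). *)
Definition Ghom (K : fieldType) (U U' : lmodType K) (d : nat)
  (rho : GRep K U) (rho' : GRep K U') (f : U -> U') : Prop :=
  linmap f /\
  [/\ forall i x, f (opL rho i x) = opL rho' (d + i) (f x),
      forall i x, f (opH rho i x) = opH rho' (d + i) (f x),
      forall i x, f (opI rho i x) = opI rho' i (f x),
      forall i x, f (opJ rho i x) = opJ rho' i (f x)
    & [/\ forall x, f (opc1 rho x) = opc1 rho' (f x),
          forall x, f (opc2 rho x) = opc2 rho' (f x)
        & forall x, f (opc3 rho x) = opc3 rho' (f x)]].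

(* (W, rhoW, iota) is the induced module Ind_{G^{(m,0)}}^{G_0} V:        *)
(* universal property of induction.                                      *)
Definition is_induced (K : fieldType) (V W : lmodType K) (m : nat)
  (rhoV : GRep K V) (rhoW : GRep K W) (iota : V -> W) : Prop :=
  is_Grep m rhoV /\ is_Grep 0 rhoW /\ Ghom m rhoV rhoW iota /\
  forall (W' : lmodType K) (rho' : GRep K W') (f : V -> W'),
    is_Grep 0 rho' -> Ghom m rhoV rho' f ->
    exists g : W -> W',
      (Ghom 0 rhoW rho' g /\ forall v, g (iota v) = f v) /\
      forall g' : W -> W', Ghom 0 rhoW rho' g' -> (forall v, g' (iota v) = f v) ->
        forall x, g' x = g x.

(* Elements of N^m are {ffun 'I_m -> nat}; h i is the entry h_i.        *)

Section PBW.
Variables (K : fieldType) (V W : lmodType K) (m : nat).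
Variables (rhoW : GRep K W) (iota : V -> W).

Definition Nm := {ffun 'I_m -> nat}.
Definition ix := (Nm * Nm)%type.

(* L^l w = L_{m-1}^{l_{m-1}} ... L_0^{l_0} w  (L_0 applied first) *)
Definition monL (l : Nm) (w : W) : W :=
  foldl (fun acc (i : 'I_m) => iter (l i) (opL rhoW i) acc) w (enum 'I_m).
Definition monH (h : Nm) (w : W) : W :=
  foldl (fun acc (i : 'I_m) => iter (h i) (opH rhoW i) acc) w (enum 'I_m).
Definition mon (p : ix) (w : W) : W := monH p.1 (monL p.2 w).

Definition fsupp (c : ix -> V) (s : seq ix) : Prop :=
  forall p, p \notin s -> c p = 0.

Definition pbw_sum (c : ix -> V) (s : seq ix) : W :=
  \sum_(p <- s) mon p (iota (c p)).

Definition PBW_decomp : Prop :=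
  (forall w : W, exists (c : ix -> V) (s : seq ix),
      [/\ uniq s, fsupp c s & w = pbw_sum c s]) /\
  (forall (c c' : ix -> V) (s : seq ix), uniq s -> fsupp c s -> fsupp c' s ->
      pbw_sum c s = pbw_sum c' s -> forall p, c p = c' p).

Definition wt (i : Nm) : nat := (\sum_(k < m) (m - k) * i k)%N.

Definition succ1 (i j : Nm) : Prop :=
  exists k : 'I_m, (j k < i k)%N /\ forall s : 'I_m, (s < k)%N -> i s = j s.

Definition succ2 (p q : ix) : Prop :=
  (wt q.1 + wt q.2 < wt p.1 + wt p.2)%N
  \/ (wt p.1 + wt p.2 = wt q.1 + wt q.2 /\ succ1 p.2 q.2)
  \/ (wt p.1 + wt p.2 = wt q.1 + wt q.2 /\ p.2 = q.2 /\ succ1 p.1 q.1).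

Definition is_deg (w : W) (d : ix) : Prop :=
  exists (c : ix -> V) (s : seq ix),
    [/\ uniq s, fsupp c s, w = pbw_sum c s, c d != 0
      & forall p, c p != 0 -> p = d \/ succ2 d p].

End PBW.

Definition subeps (m : nat) (i : Nm m) (r : 'I_m) : Nm m :=
  [ffun k => (i k - (k == r))%N].
Definition zeroNm (m : nat) : Nm m := [ffun _ => 0%N].

(* Main.v *)
Require Import Defs.
From HB Require Import structures.
From mathcomp Require Import all_boot all_order all_algebra reals.
From mathcomp.real_closed Require Import complex.
Import GRing.Theory Num.Theory.
Local Open Scope ring_scope.
Set Implicit Arguments.
Unset Strict Implicit.
Unset Printing Implicit Defensive.
From mathcomp Require Import zify.
Section Lin.
Variable K : fieldType.

Lemma linD (U U2 : lmodType K) (f : U -> U2) : linmap f -> forall x y, f (x + y) = f x + f y.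
Proof. by move=> lf x y; have := lf 1 x y; rewrite !scale1r. Qed.
Lemma lin0 (U U2 : lmodType K) (f : U -> U2) : linmap f -> f 0 = 0.
Proof. move=> lf; have := linD lf 0 0; rewrite addr0 => h. by apply: (@addrI _ (f 0)); rewrite addr0 -h. Qed.
Lemma linZ (U U2 : lmodType K) (f : U -> U2) : linmap f -> forall a x, f (a *: x) = a *: f x.
Proof. by move=> lf a x; have := lf a x 0; rewrite !addr0 (lin0 lf) addr0. Qed.
Lemma linN (U U2 : lmodType K) (f : U -> U2) : linmap f -> forall x, f (- x) = - f x.
Proof. by move=> lf x; rewrite -scaleN1r (linZ lf) scaleN1r. Qed.
Lemma linB (U U2 : lmodType K) (f : U -> U2) : linmap f -> forall x y, f (x - y) = f x - f y.
Proof. by move=> lf x y; rewrite (linD lf) (linN lf). Qed.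
Lemma lin_sum (U U2 : lmodType K) (f : U -> U2) (I : Type) (s : seq I) (F : I -> U) :
  linmap f -> f (\sum_(i <- s) F i) = \sum_(i <- s) f (F i).
Proof.
move=> lf; elim: s => [|x s IH]; first by rewrite !big_nil (lin0 lf).
by rewrite !big_cons (linD lf) IH.
Qed.
Lemma lin_comp (U U2 U3 : lmodType K) (f : U -> U2) (g : U2 -> U3) :
  linmap f -> linmap g -> linmap (fun x => g (f x)).
Proof. by move=> lf lg a x y; rewrite lf lg. Qed.
Lemma lin_iter (U : lmodType K) (f : U -> U) n : linmap f -> linmap (iter n f).
Proof. move=> lf; elim: n => [|n IH] //= a x y; by rewrite !iterS IH lf. Qed.
End Lin.

Definition addeps (m : nat) (i : Nm m) (r : 'I_m) : Nm m :=
  [ffun k => (i k + (k == r))%N].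

Lemma addepsE m (i : Nm m) r k : addeps i r k = (i k + (k == r))%N.
Proof. by rewrite ffunE. Qed.
Lemma subepsE m (i : Nm m) r k : subeps i r k = (i k - (k == r))%N.
Proof. by rewrite ffunE. Qed.
Lemma zeroNmE m k : zeroNm m k = 0%N.
Proof. by rewrite ffunE. Qed.

Lemma addepsK m (i : Nm m) r : subeps (addeps i r) r = i.
Proof. by apply/ffunP=> k; rewrite subepsE addepsE addnK. Qed.
Lemma subepsK m (i : Nm m) r : (0 < i r)%N -> addeps (subeps i r) r = i.
Proof.
move=> h; apply/ffunP=> k; rewrite addepsE subepsE.
by case: eqP => [->|_]; rewrite ?subn0 ?addn0 // subn1 addn1 prednK.
Qed.
Lemma addeps_subeps_C m (i : Nm m) r j : r != j ->
  addeps (subeps i j) r = subeps (addeps i r) j.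
Proof.
move=> ne; apply/ffunP=> k; rewrite !ffunE.
case: (eqVneq k r) => [->|_] /=; last by rewrite !addn0.
by rewrite (negbTE ne) !subn0.
Qed.

Section Wt.
Variable m : nat.
Lemma wt_addeps (e : Nm m) a : wt (addeps e a) = (wt e + (m - a))%N.
Proof.
rewrite /wt.
rewrite (eq_bigr (fun k : 'I_m => (m - k) * e k + (m - k) * (k == a))%N); last first.
  by move=> k _; rewrite addepsE mulnDr.
rewrite big_split /=; congr (_ + _)%N.
rewrite (bigD1 a) //= eqxx muln1 big1 ?addn0 // => k /negbTE ->; by rewrite muln0.
Qed.
Lemma wt_subeps (e : Nm m) a : (0 < e a)%N -> wt e = (wt (subeps e a) + (m - a))%N.
Proof. by move=> h; rewrite -{1}(subepsK h) wt_addeps. Qed.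
Lemma wt_zero : wt (zeroNm m) = 0%N.
Proof. by rewrite /wt big1 // => k _; rewrite zeroNmE muln0. Qed.
Lemma wt_ge (e : Nm m) (a : 'I_m) : ((m - a) * e a <= wt e)%N.
Proof.
rewrite /wt (bigD1 a) //=; exact: leq_addr.
Qed.
End Wt.

Section Mon.
Variables (K : fieldType) (W : lmodType K) (m : nat).
Implicit Types (f : nat -> W -> W) (e : Nm m).

Definition G f e (x : W) : W :=
  foldl (fun acc (i : 'I_m) => iter (e i) (f i) acc) x (enum 'I_m).

Definition Fr f e (t : seq 'I_m) (x : W) :=
  foldr (fun (i : 'I_m) acc => iter (e i) (f i) acc) x t.

Lemma G_Fr f e x : G f e x = Fr f e (rev (enum 'I_m)) x.
Proof. by rewrite /G -{1}(revK (enum 'I_m)) foldl_rev. Qed.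

Lemma Fr_eq f e e' t x : (forall i, i \in t -> e i = e' i) -> Fr f e t x = Fr f e' t x.
Proof.
elim: t => [|i t IH] h //=.
by rewrite (h i (mem_head _ _)) IH // => j jt; apply: h; rewrite inE jt orbT.
Qed.

Lemma rev_enum_sorted : sorted (fun x y : 'I_m => (y < x)%N) (rev (enum 'I_m)).
Proof.
rewrite rev_sorted.
have : sorted ltn (map val (enum 'I_m)) by rewrite val_enum_ord iota_ltn_sorted.
by rewrite sorted_map.
Qed.

Lemma Fr_peel f e a t x : sorted (fun x y : 'I_m => (y < x)%N) t -> a \in t ->
  (forall i : 'I_m, (a < i)%N -> e i = 0%N) ->
  Fr f (addeps e a) t x = f a (Fr f e t x).
Proof.
elim: t => [|i t IH] //= st; rewrite inE => /orP ha hz.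
have st' := path_sorted st.
have alli : all (fun y : 'I_m => (y < i)%N) t.
  apply: (order_path_min (leT := fun x y : 'I_m => (y < x)%N)) st.
  by move=> y0 x0 z0 /= h1 h2; exact: ltn_trans h1.
case: ha => [/eqP ai | aint].
  subst i.
  rewrite (@Fr_eq f (addeps e a) e) ?addepsE ?eqxx ?addn1 ?iterS //.
  move=> j jt; rewrite addepsE; case: (eqVneq j a) => [ja|] /=; last by rewrite addn0.
  by move: alli => /allP /(_ j jt); rewrite ja ltnn.
have ai : (a < i)%N by move: alli => /allP /(_ a aint).
have ia : (i == a) = false by apply/eqP => ia; move: ai; rewrite ia ltnn.
by rewrite addepsE hz // ia /= IH.
Qed.

Lemma G_peel f e (a : 'I_m) x : (forall i : 'I_m, (a < i)%N -> e i = 0%N) ->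
  G f (addeps e a) x = f a (G f e x).
Proof.
move=> hz; rewrite !G_Fr Fr_peel //; first exact: rev_enum_sorted.
by rewrite mem_rev mem_enum.
Qed.

Lemma G_zero f x : G f (zeroNm m) x = x.
Proof.
rewrite G_Fr; elim: (rev (enum 'I_m)) => //= i t ->; by rewrite zeroNmE.
Qed.

Lemma G_lin f e : (forall i, linmap (f i)) -> linmap (G f e).
Proof.
move=> lf a x y; rewrite !G_Fr; elim: (rev (enum 'I_m)) => //= i t ->.
exact: lin_iter.
Qed.
End Mon.

Definition W2 (m : nat) (p : ix m) := (wt p.1 + wt p.2)%N.

Section Ord.
Variable m : nat.
Implicit Types (a b : Nm m) (p q : ix m).

Lemma succ1_sub2 a b (r : 'I_m) : succ1 a b -> (0 < b r)%N -> succ1 (subeps a r) (subeps b r).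
Proof.
move=> [k0 [hk hs]] br; exists k0; split.
  rewrite !subepsE; case: (eqVneq k0 r) => [e|] /=; last by rewrite !subn0.
  by rewrite e in hk *; lia.
by move=> s0 ss; rewrite !subepsE hs.
Qed.

Lemma succ1_subr a b (r : 'I_m) : succ1 a b -> (0 < b r)%N -> succ1 a (subeps b r).
Proof.
move=> [k0 [hk hs]] br.
case: (ltnP k0 r) => kr.
  have ne : (k0 == r) = false by apply/eqP => e; move: kr; rewrite e ltnn.
  exists k0; split; first by rewrite subepsE ne subn0.
  move=> s0 ss; have ne' : (s0 == r) = false.
    by apply/eqP => e; move: (ltn_trans ss kr); rewrite e ltnn.
  by rewrite subepsE ne' subn0 hs.
exists r; split.
  rewrite subepsE eqxx /=; case: (eqVneq k0 r) => [e|ne].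
    by rewrite e in hk; lia.
  have rk : (r < k0)%N.
    by rewrite ltn_neqAle kr andbT; apply: contra ne => /eqP e; apply/eqP/val_inj.
  by rewrite hs //; lia.
move=> s0 sr; have ne' : (s0 == r) = false by apply/eqP => e; move: sr; rewrite e ltnn.
by rewrite subepsE ne' subn0 hs // (leq_trans sr).
Qed.

Lemma succ1_self a (r : 'I_m) : (0 < a r)%N -> succ1 a (subeps a r).
Proof.
move=> ar; exists r; split; first by rewrite subepsE eqxx subn1 prednK.
move=> s0 sr; rewrite subepsE; have -> : (s0 == r) = false by apply/eqP => e; move: sr; rewrite e ltnn.
by rewrite subn0.
Qed.

Lemma succ1_irr a : ~ succ1 a a.
Proof. by move=> [k0 [h _]]; move: h; rewrite ltnn. Qed.

Lemma succ1_zero a : ~ succ1 (zeroNm m) a.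
Proof. by move=> [k0 [h _]]; move: h; rewrite zeroNmE. Qed.

Lemma succ2_irr p : ~ succ2 p p.
Proof.
by case=> [|[[_ /succ1_irr]|[_ [_ /succ1_irr]]]] //; rewrite ltnn.
Qed.

Lemma succ2_W2 p q : succ2 p q -> (W2 q <= W2 p)%N.
Proof. rewrite /W2 => -[h|[[h _]|[h _]]]; lia. Qed.

Lemma subeps_inj a b (r : 'I_m) : (0 < a r)%N -> (0 < b r)%N -> subeps a r = subeps b r -> a = b.
Proof. by move=> ha hb e; rewrite -(subepsK ha) -(subepsK hb) e. Qed.

Lemma W2_subeps1 p (r : 'I_m) : (0 < p.1 r)%N -> (W2 (subeps p.1 r, p.2) + (m - r))%N = W2 p.
Proof. move=> h; rewrite /W2 /= (wt_subeps h); lia. Qed.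
Lemma W2_subeps2 p (r : 'I_m) : (0 < p.2 r)%N -> (W2 (p.1, subeps p.2 r) + (m - r))%N = W2 p.
Proof. move=> h; rewrite /W2 /= (wt_subeps h); lia. Qed.

Lemma wt_zero_eq (e : Nm m) : wt e = 0%N -> e = zeroNm m.
Proof.
move=> h; apply/ffunP => i; rewrite zeroNmE; apply/eqP; rewrite -leqn0.
have := wt_ge e i; rewrite h leqn0 muln_eq0 subn_eq0 leqNgt ltn_ord /= => /eqP ->.
by [].
Qed.

Lemma ord1A (h l : Nm m) (r : 'I_m) p : (0 < h r)%N ->
  (p = (h, l) \/ succ2 (h, l) p) -> (0 < p.1 r)%N ->
  (subeps p.1 r, p.2) = (subeps h r, l) \/ succ2 (subeps h r, l) (subeps p.1 r, p.2).
Proof.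
move=> hr [->|hp] pr; first by left.
right; have e1 := W2_subeps1 pr; have e2 := W2_subeps1 (p := (h, l)) hr.
move: hp; rewrite /succ2 -!/(W2 _) /=.
case=> [lt|[[eq s1]|[eq [e s1]]]].
- by left; move: e1 e2 lt; rewrite /W2 /=; lia.
- by right; left; split => //; move: e1 e2 eq; rewrite /W2 /=; lia.
- right; right; split; first by move: e1 e2 eq; rewrite /W2 /=; lia.
  by split => //; apply: succ1_sub2.
Qed.

Lemma ord1B (h l : Nm m) (r : 'I_m) p : (0 < h r)%N ->
  (p = (h, l) \/ succ2 (h, l) p) -> (0 < p.2 r)%N ->
  succ2 (subeps h r, l) (p.1, subeps p.2 r).
Proof.
move=> hr hp pr; have e1 := W2_subeps2 pr; have e2 := W2_subeps1 (p := (h, l)) hr.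
case: hp => [ep|hp].
  subst p; right; left; split; first by move: e1 e2; rewrite /W2 /=; lia.
  exact: succ1_self.
move: hp; rewrite /succ2 -!/(W2 _) /=.
case=> [lt|[[eq s1]|[eq [e s1]]]].
- by left; move: e1 e2 lt; rewrite /W2 /=; lia.
- right; left; split; first by move: e1 e2 eq; rewrite /W2 /=; lia.
  exact: succ1_subr.
- right; left; split; first by move: e1 e2 eq; rewrite /W2 /=; lia.
  by rewrite -e; apply: succ1_self; rewrite e.
Qed.
End Ord.

Section Ord2.
Variable m : nat.
Implicit Types (a b : Nm m) (p q : ix m).

Lemma wt_add a b : wt [ffun i => (a i + b i)%N] = (wt a + wt b)%N.
Proof.
rewrite /wt -big_split /=; apply: eq_bigr => i _; by rewrite ffunE mulnDr.
Qed.

Lemma ord2A (l : Nm m) (r : 'I_m) p : (0 < l r)%N -> (forall i : 'I_m, (r < i)%N -> l i = 0%N) ->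
  (p = (zeroNm m, l) \/ succ2 (zeroNm m, l) p) -> (0 < p.1 r)%N ->
  (subeps p.1 r, p.2) = (zeroNm m, subeps l r) \/
  succ2 (zeroNm m, subeps l r) (subeps p.1 r, p.2).
Proof.
move=> lr lz [->|hp] pr; first by move: pr; rewrite zeroNmE.
have e1 := W2_subeps1 pr; have e2 := W2_subeps2 (p := (zeroNm m, l)) lr.
move: hp; rewrite /succ2 -!/(W2 _) /=.
case=> [lt|[[eq s1]|[eq [e s1]]]]; last by case: (succ1_zero s1).
  by right; left; move: e1 e2 lt; rewrite /W2 /=; lia.
have weq : W2 (subeps p.1 r, p.2) = W2 (zeroNm m, subeps l r).
  by move: e1 e2 eq; rewrite /W2 /=; lia.
case: s1 => k0 [hk hs].
have rk : ~ (r < k0)%N by move=> rk; move: hk; rewrite lz.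
case: (ltnP k0 r) => kr.
  have ne : (k0 == r) = false by apply/eqP => e0; move: kr; rewrite e0 ltnn.
  right; right; left; split => //=; exists k0; split.
    by rewrite subepsE ne subn0.
  move=> s0 ss; have ne' : (s0 == r) = false.
    by apply/eqP => e0; move: (ltn_trans ss kr); rewrite e0 ltnn.
  by rewrite subepsE hs // ne' subn0.
have kr' : k0 = r by apply/val_inj/eqP; rewrite eqn_leq kr andbT leqNgt; apply/negP.
subst k0.
have hs' : forall s0 : 'I_m, (s0 < r)%N -> subeps l r s0 = p.2 s0.
  move=> s0 ss; have ne' : (s0 == r) = false by apply/eqP => e0; move: ss; rewrite e0 ltnn.
  by rewrite subepsE hs // ne' subn0.
case: (ltnP (p.2 r) (l r - 1)) => hlt.
  right; right; left; split => //=; exists r; split; first by rewrite subepsE eqxx.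
  by move=> s0 ss; rewrite hs'.
have p2r : p.2 r = (l r - 1)%N by lia.
pose dlt := [ffun i => (p.2 i - subeps l r i)%N].
have hge : forall i, (subeps l r i <= p.2 i)%N.
  move=> i; case: (ltngtP i r) => [ir|ri|ir].
  - by rewrite hs'.
  - by rewrite subepsE lz.
  - have -> : i = r by apply/val_inj.
    by rewrite subepsE eqxx p2r /=.
have p2E : p.2 = [ffun i => (subeps l r i + dlt i)%N].
  by apply/ffunP => i; have := hge i; rewrite !ffunE => hh; rewrite subnKC.
have w2 : wt p.2 = (wt (subeps l r) + wt dlt)%N by rewrite {1}p2E wt_add.
have wl := wt_subeps lr; have wp1 := wt_subeps pr.
have w0 := wt_zero m.
have hw : (wt (subeps p.1 r) + wt dlt)%N = 0%N.
  move: eq; rewrite /W2 /= w2 wl wp1 w0; lia.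
have z1 : subeps p.1 r = zeroNm m by apply: wt_zero_eq; lia.
have z2 : dlt = zeroNm m by apply: wt_zero_eq; lia.
left; rewrite z1; congr (_, _); rewrite p2E z2; apply/ffunP => i.
by rewrite !ffunE addn0.
Qed.

Lemma ord2B (l : Nm m) (r : 'I_m) p : (0 < l r)%N ->
  (p = (zeroNm m, l) \/ succ2 (zeroNm m, l) p) -> (0 < p.2 r)%N ->
  (p.1, subeps p.2 r) = (zeroNm m, subeps l r) \/
  succ2 (zeroNm m, subeps l r) (p.1, subeps p.2 r).
Proof.
move=> lr [->|hp] pr; first by left.
have e1 := W2_subeps2 pr; have e2 := W2_subeps2 (p := (zeroNm m, l)) lr.
move: hp; rewrite /succ2 -!/(W2 _) /=.
case=> [lt|[[eq s1]|[eq [e s1]]]]; last by case: (succ1_zero s1).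
  by right; left; move: e1 e2 lt; rewrite /W2 /=; lia.
right; right; left; split; first by move: e1 e2 eq; rewrite /W2 /=; lia.
exact: succ1_sub2.
Qed.
End Ord2.

Lemma sum_pred1_seq (T : eqType) (A : nmodType) (s : seq T) (x : T) (F : A) :
  uniq s -> x \in s -> \sum_(p <- s) (if x == p then F else 0) = F.
Proof.
elim: s => [|y s IH] //= /andP [ys us]; rewrite inE big_cons => /orP [/eqP xy|xs].
  subst y; rewrite eqxx big1_seq ?addr0 // => p /andP [_ ps]; case: eqP => // xp.
  by move: ys; rewrite xp ps.
rewrite IH //; case: eqP => [xy|]; last by rewrite add0r.
by move: ys; rewrite -xy xs.
Qed.


Lemma maxpos m (e : Nm m) : e != zeroNm m ->
  exists a : 'I_m, (0 < e a)%N /\ forall i : 'I_m, (a < i)%N -> e i = 0%N.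
Proof.
move=> ne.
have [i0 hi0] : exists i0, (0 < e i0)%N.
  apply/existsP; apply: contraR ne => /existsPn h; apply/eqP/ffunP => i.
  by rewrite zeroNmE; move: (h i); rewrite lt0n negbK => /eqP.
case: (@arg_maxnP _ i0 (fun i => 0 < e i)%N (fun i : 'I_m => (i : nat)) hi0) => a ha hmax.
exists a; split => // i ai; case: (posnP (e i)) => // hi.
by move: (hmax i hi) => /=; rewrite leqNgt ai.
Qed.

Section Main.
Variables (K : fieldType) (V W : lmodType K) (m : nat).
Variables (rhoW : GRep K W) (iota : V -> W).
Hypothesis linL : forall i, linmap (opL rhoW i).
Hypothesis linH : forall i, linmap (opH rhoW i).
Hypothesis lin_iota : linmap iota.
Hypothesis m_gt0 : (0 < m)%N.

Local Notation ix := (ix m).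
Local Notation mon := (@Defs.mon _ _ m rhoW).

Definition le_ix (q p : ix) := forall i, (q.1 i <= p.1 i)%N /\ (q.2 i <= p.2 i)%N.
Definition S (t : seq (ix * V)) : W := \sum_(e <- t) mon e.1 (iota e.2).

Lemma mon_lin p : linmap (mon p).
Proof. exact: lin_comp (G_lin _ linL) (G_lin _ linH). Qed.
Lemma moni_lin p : linmap (fun u => mon p (iota u)).
Proof. exact: lin_comp lin_iota (mon_lin p). Qed.
Lemma moni0 p : mon p (iota 0) = 0.
Proof. exact: (lin0 (moni_lin p)). Qed.

Lemma S_cat t1 t2 : S (t1 ++ t2) = S t1 + S t2.
Proof. by rewrite /S big_cat. Qed.
Lemma S_nil : S [::] = 0. Proof. by rewrite /S big_nil. Qed.
Lemma S_seq1 e : S [:: e] = mon e.1 (iota e.2). Proof. by rewrite /S big_seq1. Qed.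
Lemma S_scale c t : c *: S t = S (map (fun e => (e.1, c *: e.2)) t).
Proof.
rewrite /S big_map scaler_sumr; apply: eq_bigr => e _ /=.
by rewrite (linZ lin_iota) (linZ (mon_lin _)).
Qed.
Lemma S_map (X : W -> W) (lift : ix -> ix) p' t : linmap X ->
  (forall q x, le_ix q p' -> mon (lift q) x = X (mon q x)) ->
  (forall e, e \in t -> le_ix e.1 p') ->
  X (S t) = S (map (fun e => (lift e.1, e.2)) t).
Proof.
move=> lX hm ht; rewrite /S (lin_sum _ _ lX) big_map big_seq [RHS]big_seq.
by apply: eq_bigr => e et /=; rewrite hm //; apply: ht.
Qed.

Lemma mon0 x : mon (zeroNm m, zeroNm m) x = x.
Proof. by rewrite /Defs.mon /monH /monL -!/(G _ _ _) !G_zero. Qed.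

Lemma monH_lift (q : ix) (a : 'I_m) x : (forall i : 'I_m, (a < i)%N -> q.1 i = 0%N) ->
  mon (addeps q.1 a, q.2) x = opH rhoW a (mon q x).
Proof. by move=> h; rewrite /Defs.mon /monH -!/(G _ _ _) G_peel. Qed.

Lemma monL_lift (q : ix) (a : 'I_m) x : q.1 = zeroNm m ->
  (forall i : 'I_m, (a < i)%N -> q.2 i = 0%N) ->
  mon (q.1, addeps q.2 a) x = opL rhoW a (mon q x).
Proof.
move=> h0 h; rewrite /Defs.mon /monH /monL -!/(G _ _ _) h0 !G_zero G_peel //.
Qed.

Definition peelH (a : 'I_m) (p p' : ix) :=
  [/\ p.1 = addeps p'.1 a, p.2 = p'.2 & forall i : 'I_m, (a < i)%N -> p'.1 i = 0%N].
Definition peelL (a : 'I_m) (p p' : ix) :=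
  [/\ p.1 = zeroNm m, p'.1 = zeroNm m, p.2 = addeps p'.2 a
    & forall i : 'I_m, (a < i)%N -> p'.2 i = 0%N].

Lemma peel_ex (p : ix) : p = (zeroNm m, zeroNm m) \/
  exists a p', peelH a p p' \/ peelL a p p'.
Proof.
case: p => h l.
case: (eqVneq h (zeroNm m)) => [->|nh]; last first.
  have [a [ha hz]] := maxpos nh.
  right; exists a, (subeps h a, l); left; split => //=; first by rewrite subepsK.
  by move=> i ai; rewrite subepsE hz // subn0.
case: (eqVneq l (zeroNm m)) => [->|nl]; first by left.
have [a [ha hz]] := maxpos nl.
right; exists a, (zeroNm m, subeps l a); right; split => //=; first by rewrite subepsK.
by move=> i ai; rewrite subepsE hz // subn0.
Qed.

Definition gs (d : ix) (t : seq (ix * V)) : V := \sum_(e <- t) (if e.1 == d then e.2 else 0).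

Lemma deg_of_list (t : seq (ix * V)) (d : ix) (w : W) : w = S t ->
  (forall e, e \in t -> e.2 != 0 -> e.1 = d \/ succ2 d e.1) ->
  gs d t != 0 -> is_deg rhoW iota w d.
Proof.
move=> -> hv hd.
pose c := fun p : ix => gs p t.
exists c, (undup (map fst t)); split.
- exact: undup_uniq.
- move=> p; rewrite mem_undup => pn; rewrite /c /gs big1_seq // => e /andP [_ et].
  case: eqP => // ep; move: pn; rewrite -ep; by rewrite (map_f fst et).
- rewrite /pbw_sum /c /gs.
  rewrite (eq_bigr (fun p => \sum_(e <- t) (if e.1 == p then mon e.1 (iota e.2) else 0))); last first.
    move=> p _; rewrite (lin_sum _ _ (moni_lin p)); apply: eq_bigr => e _.
    by case: eqP => [->|_] //; rewrite moni0.
  rewrite exchange_big /=; rewrite /S; apply: eq_big_seq => e et.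
  rewrite sum_pred1_seq //; first exact: undup_uniq.
  by rewrite mem_undup (map_f fst et).
- exact: hd.
- move=> p; rewrite /c /gs => hp.
  have [e et /andP [/eqP ep e2]] : exists2 e, e \in t & (e.1 == p) && (e.2 != 0).
    apply/hasP; apply: contraR hp => /hasPn hn; rewrite big1_seq // => e /andP [_ et].
    by move: (hn e et); case: eqP => //= _; rewrite negbK => /eqP.
  by case: (hv e et e2) => h; [left|right]; rewrite -ep.
Qed.
Lemma gs_cat d t1 t2 : gs d (t1 ++ t2) = gs d t1 + gs d t2.
Proof. by rewrite /gs big_cat. Qed.

Variables (Z : nat -> W -> W) (ZV : nat -> V -> V) (sigma : K) (k : nat).
Hypothesis linZn : forall n, linmap (Z n).
Hypothesis linZV : forall n, linmap (ZV n).
Hypothesis Zio : forall n u, Z n (iota u) = iota (ZV n u).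
Hypothesis ZH : forall (a n : nat) y,
  opH rhoW a (Z n y) - Z n (opH rhoW a y) = sigma *: Z (a + n)%N y.
Hypothesis ZL : forall (a n : nat) y,
  opL rhoW a (Z n y) - Z n (opL rhoW a y) = (n%:R - a%:R) *: Z (a + n)%N y.
Hypothesis Zvan : forall j u, (k < j)%N -> ZV j u = 0.

Definition L1P (p : ix) := forall n u, exists t : seq (ix * V),
  (forall e, e \in t -> le_ix e.1 p /\ (W2 e.1 + m + n <= W2 p + k)%N) /\
  Z n (mon p (iota u)) = mon p (iota (ZV n u)) + S t.

Lemma L1_step (X : W -> W) (lift : ix -> ix) (a : 'I_m) (gamma : nat -> K) (p p' : ix) :
  linmap X ->
  (forall q x, le_ix q p' -> mon (lift q) x = X (mon q x)) ->
  (forall q, le_ix q p' -> le_ix (lift q) p) ->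
  (forall q, W2 (lift q) = (W2 q + (m - a))%N) ->
  lift p' = p -> le_ix p' p ->
  (forall n y, Z n (X y) = X (Z n y) - gamma n *: Z (a + n)%N y) ->
  L1P p' -> L1P p.
Proof.
move=> lX hm hle hW hp hpp hc IH n u.
have hp' : forall x, mon p x = X (mon p' x).
  by move=> x; rewrite -hp hm // => i; split.
have [t1 [ht1 e1]] := IH n u.
have [t2 [ht2 e2]] := IH (a + n)%N u.
have Wp : W2 p = (W2 p' + (m - a))%N by rewrite -hp hW.
have am : (a < m)%N := ltn_ord a.
set t0 := if (a + n <= k)%N then [:: (p', - gamma n *: ZV (a + n)%N u)] else [::].
exists (map (fun e => (lift e.1, e.2)) t1 ++ t0 ++ map (fun e => (e.1, - gamma n *: e.2)) t2).
split.
  move=> e; rewrite !mem_cat => /or3P [/mapP [e' e't1 ->] | | /mapP [e' e't2 ->]] /=.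
  - have [le1 w1] := ht1 e' e't1; split; first exact: hle.
    rewrite hW Wp; move: (W2 e'.1) w1 => x w1; lia.
  - rewrite /t0; case: ifP => //= hk; rewrite inE => /eqP -> /=; split => //.
    rewrite Wp; lia.
  - have [le2 w2] := ht2 e' e't2; split.
      by move=> i; have [h1 h2] := le2 i; have [h3 h4] := hpp i; split; apply: leq_trans; eauto.
    rewrite Wp; move: (W2 e'.1) w2 => x w2; lia.
rewrite hp' hc e1 (linD lX) -hp' (S_map lX hm) //; last by move=> e /ht1 [].
rewrite e2 scalerDr opprD -!scaleNr S_scale -!addrA !S_cat; congr (_ + (_ + (_ + _))).
rewrite -(linZ (moni_lin p')) /t0; case: ifP => hk; first by rewrite S_seq1.
by rewrite Zvan ?scaler0 ?moni0 ?S_nil // ltnNge hk.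
Qed.

Lemma L1_base : L1P (zeroNm m, zeroNm m).
Proof. by move=> n u; exists [::]; split => //; rewrite !mon0 S_nil addr0 Zio. Qed.

Lemma le_ix_refl p : le_ix p p. Proof. by move=> i; split. Qed.

Lemma le_zero (e : Nm m) (q : Nm m) : (forall i, q i <= e i)%N -> e = zeroNm m -> q = zeroNm m.
Proof.
move=> h he; apply/ffunP => i; move: (h i); rewrite he !zeroNmE leqn0 => /eqP //.
Qed.

Lemma stepH_hyps (a : 'I_m) (p p' : ix) : peelH a p p' ->
  [/\ (forall q x, le_ix q p' -> mon (addeps q.1 a, q.2) x = opH rhoW a (mon q x)),
      (forall q, le_ix q p' -> le_ix (addeps q.1 a, q.2) p),
      (forall q, W2 (addeps q.1 a, q.2) = (W2 q + (m - a))%N),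
      (addeps p'.1 a, p'.2) = p & le_ix p' p].
Proof.
case: p => h l [/= -> -> hz]; split.
- move=> q x hq; apply: monH_lift => i ai; have [h1 _] := hq i.
  by apply/eqP; rewrite -leqn0 -(hz i ai).
- by move=> q hq i; have [h1 h2] := hq i; rewrite /= !addepsE leq_add2r.
- by move=> q; rewrite /W2 /= wt_addeps addnAC.
- by [].
- by move=> i; rewrite /= addepsE leq_addr.
Qed.

Lemma stepL_hyps (a : 'I_m) (p p' : ix) : peelL a p p' ->
  [/\ (forall q x, le_ix q p' -> mon (q.1, addeps q.2 a) x = opL rhoW a (mon q x)),
      (forall q, le_ix q p' -> le_ix (q.1, addeps q.2 a) p),
      (forall q, W2 (q.1, addeps q.2 a) = (W2 q + (m - a))%N),
      (p'.1, addeps p'.2 a) = p & le_ix p' p].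
Proof.
case: p => h l [/= -> h0 -> hz]; split.
- move=> q x hq; apply: monL_lift.
    by apply: (le_zero (e := p'.1)) => // i; have [] := hq i.
  by move=> i ai; have [_ h2] := hq i; apply/eqP; rewrite -leqn0 -(hz i ai).
- by move=> q hq i; have [h1 h2] := hq i; rewrite /= !addepsE leq_add2r; split => //; move: h1; rewrite h0.
- by move=> q; rewrite /W2 /= wt_addeps addnA.
- by rewrite h0.
- by move=> i; rewrite /= addepsE leq_addr h0.
Qed.

Lemma commH (a : 'I_m) n y : Z n (opH rhoW a y) = opH rhoW a (Z n y) - sigma *: Z (a + n)%N y.
Proof. by rewrite -ZH opprB addrC subrK. Qed.
Lemma commL (a : 'I_m) n y : Z n (opL rhoW a y) = opL rhoW a (Z n y) - (n%:R - a%:R) *: Z (a + n)%N y.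
Proof. by rewrite -ZL opprB addrC subrK. Qed.

Lemma L1 p : L1P p.
Proof.
move: {2}(W2 p) (erefl (W2 p)) => N; elim/ltn_ind: N p => N IH p hN.
case: (peel_ex p) => [->|[a [p' [hp|hp]]]]; first exact: L1_base.
- have [h1 h2 h3 h4 h5] := stepH_hyps hp.
  apply: (@L1_step (opH rhoW a) (fun q => (addeps q.1 a, q.2)) a (fun _ => sigma) p p') => //.
    by move=> n y; rewrite commH.
  apply: (IH (W2 p')) => //; rewrite -hN -h4 h3; move: (ltn_ord a); lia.
- have [h1 h2 h3 h4 h5] := stepL_hyps hp.
  apply: (@L1_step (opL rhoW a) (fun q => (q.1, addeps q.2 a)) a (fun n => n%:R - a%:R) p p') => //.
    by move=> n y; rewrite commL.
  apply: (IH (W2 p')) => //; rewrite -hN -h4 h3; move: (ltn_ord a); lia.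
Qed.

Section L2.
Variables (j : 'I_m) (n : nat).
Hypothesis njk : (n + j)%N = k.

Definition Acoef (p : ix) : K := - (sigma * (p.1 j)%:R).
Definition Bcoef (p : ix) : K := (p.2 j)%:R * (j%:R - n%:R).
Definition Tterm (p : ix) (u : V) : W :=
  mon (subeps p.1 j, p.2) (iota (Acoef p *: ZV k u)) +
  mon (p.1, subeps p.2 j) (iota (Bcoef p *: ZV k u)).

Definition L2P (p : ix) := forall u, exists t : seq (ix * V),
  (forall e, e \in t -> le_ix e.1 p /\ (W2 e.1 + m + n < W2 p + k)%N) /\
  Z n (mon p (iota u)) = mon p (iota (ZV n u)) + Tterm p u + S t.

Lemma L2_step (X : W -> W) (lift : ix -> ix) (a : 'I_m) (gamma : nat -> K) (p p' : ix) :
  linmap X ->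
  (forall q x, le_ix q p' -> mon (lift q) x = X (mon q x)) ->
  (forall q, le_ix q p' -> le_ix (lift q) p) ->
  (forall q, W2 (lift q) = (W2 q + (m - a))%N) ->
  lift p' = p -> le_ix p' p ->
  (forall n y, Z n (X y) = X (Z n y) - gamma n *: Z (a + n)%N y) ->
  (forall u, X (Tterm p' u) + (if a == j then mon p' (iota (- gamma n *: ZV k u)) else 0)
             = Tterm p u) ->
  L1P p' -> L2P p' -> L2P p.
Proof.
move=> lX hm hle hW hp hpp hc hT IH1 IH u.
have hp' : forall x, mon p x = X (mon p' x).
  by move=> x; rewrite -hp hm // => i; split.
have [t1 [ht1 e1]] := IH u.
have [t2 [ht2 e2]] := IH1 (a + n)%N u.
have Wp : W2 p = (W2 p' + (m - a))%N by rewrite -hp hW.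
have am : (a < m)%N := ltn_ord a.
set t0 := if (a < j)%N then [:: (p', - gamma n *: ZV (a + n)%N u)] else [::].
exists (map (fun e => (lift e.1, e.2)) t1 ++ t0 ++ map (fun e => (e.1, - gamma n *: e.2)) t2).
split.
  move=> e; rewrite !mem_cat => /or3P [/mapP [e' e't1 ->] | | /mapP [e' e't2 ->]] /=.
  - have [le1 w1] := ht1 e' e't1; split; first exact: hle.
    rewrite hW Wp; move: (W2 e'.1) w1 => x w1; lia.
  - rewrite /t0; case: ifP => //= hk; rewrite inE => /eqP -> /=; split => //.
    rewrite Wp; lia.
  - have [le2 w2] := ht2 e' e't2; split.
      by move=> i; have [h1 h2] := le2 i; have [h3 h4] := hpp i; split; apply: leq_trans; eauto.
    rewrite Wp; move: (W2 e'.1) w2 => x w2; lia.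
rewrite hp' hc e1 (linD lX) (linD lX) -hp' (S_map lX hm) //; last by move=> e /ht1 [].
rewrite e2 scalerDr opprD -!scaleNr S_scale !S_cat -hT.
rewrite -(linZ (moni_lin p')).
suff -> : mon p' (iota (- gamma n *: ZV (a + n) u)) =
   (if a == j then mon p' (iota (- gamma n *: ZV k u)) else 0) + S t0.
  set A := mon p _; set B := X (Tterm p' u); set C := if _ then _ else _.
  set D := S (map _ t1); set E := S t0; set F := S (map _ t2).
  by rewrite -!addrA; congr (_ + (_ + _)); exact: addrCA.
rewrite /t0; case: (ltngtP a j) => [aj|ja|aj].
- have -> : (a == j) = false by apply/eqP => e; move: aj; rewrite e ltnn.
  by rewrite S_seq1 add0r.
- have -> : (a == j) = false by apply/eqP => e; move: ja; rewrite e ltnn.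
  rewrite S_nil addr0 Zvan ?scaler0 ?moni0 //; lia.
- have -> : a = j by apply/val_inj.
  by rewrite S_nil addr0 eqxx -njk addnC.
Qed.

Lemma L2_base : L2P (zeroNm m, zeroNm m).
Proof.
move=> u; exists [::]; split => //; rewrite !mon0 S_nil addr0 Zio /Tterm /Acoef /Bcoef /=.
by rewrite !zeroNmE mulr0 oppr0 mul0r !scale0r !moni0 !addr0.
Qed.

Lemma TH (a : 'I_m) (p p' : ix) : peelH a p p' -> forall u,
  opH rhoW a (Tterm p' u) + (if a == j then mon p' (iota (- sigma *: ZV k u)) else 0)
             = Tterm p u.
Proof.
case: p => h l [/= -> -> hz] u; case: p' hz => h' l' /= hz.
rewrite /Tterm (linD (linH _)) /Acoef /Bcoef /=.
have z1 : forall i : 'I_m, (a < i)%N -> (subeps h' j) i = 0%N.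
  by move=> i ai; rewrite subepsE hz.
rewrite -[opH rhoW a (mon (subeps h' j, l') _)](monH_lift (q := (subeps h' j, l'))) //=.
rewrite -[opH rhoW a (mon (h', subeps l' j) _)](monH_lift (q := (h', subeps l' j))) //=.
rewrite addepsE.
case: (eqVneq a j) => [aj|ne].
  subst j; rewrite /= addn1 addrAC; congr (_ + _).
  case: (posnP (h' a)) => [h0|hpos].
    by rewrite h0 mulr0 oppr0 scale0r moni0 add0r addepsK mulr1 scaleNr.
  rewrite subepsK // addepsK -(linD (moni_lin _)) -scalerDl; congr (mon _ (iota (_ *: _))).
  by rewrite -addn1 natrD mulrDr mulr1 opprD.
by rewrite addr0 addeps_subeps_C // /= addn0.
Qed.

Lemma TL (a : 'I_m) (p p' : ix) : peelL a p p' -> forall u,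
  opL rhoW a (Tterm p' u) + (if a == j then mon p' (iota (- (n%:R - a%:R) *: ZV k u)) else 0)
             = Tterm p u.
Proof.
case: p => h l [/= -> h0 -> hz] u; case: p' h0 hz => h' l' /= -> hz.
rewrite /Tterm (linD (linL _)) /Acoef /Bcoef /= !zeroNmE mulr0 oppr0 !scale0r !moni0.
rewrite (lin0 (linL _)) !add0r.
have z1 : forall i : 'I_m, (a < i)%N -> (subeps l' j) i = 0%N.
  by move=> i ai; rewrite subepsE hz.
have zz : subeps (zeroNm m) j = zeroNm m by apply/ffunP => i; rewrite subepsE !zeroNmE.
rewrite -[opL rhoW a (mon (zeroNm m, subeps l' j) _)](monL_lift (q := (zeroNm m, subeps l' j))) //=.
rewrite addepsE.
case: (eqVneq a j) => [aj|ne].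
  subst j; rewrite /= addn1.
  case: (posnP (l' a)) => [l0|lpos].
    rewrite l0 mul0r scale0r moni0 add0r addepsK; congr (mon _ (iota (_ *: _))).
    by rewrite mul1r opprB.
  rewrite subepsK // addepsK -(linD (moni_lin _)) -scalerDl; congr (mon _ (iota (_ *: _))).
  by rewrite -addn1 natrD mulrDl mul1r opprB.
by rewrite addr0 addeps_subeps_C // /= addn0.
Qed.

Lemma L2 p : L2P p.
Proof.
move: {2}(W2 p) (erefl (W2 p)) => N; elim/ltn_ind: N p => N IH p hN.
case: (peel_ex p) => [->|[a [p' [hp|hp]]]]; first exact: L2_base.
- have [h1 h2 h3 h4 h5] := stepH_hyps hp.
  apply: (@L2_step (opH rhoW a) (fun q => (addeps q.1 a, q.2)) a (fun _ => sigma) p p') => //.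
  + by move=> n0 y; rewrite commH.
  + exact: TH.
  + exact: L1.
  apply: (IH (W2 p')) => //; rewrite -hN -h4 h3; move: (ltn_ord a); lia.
- have [h1 h2 h3 h4 h5] := stepL_hyps hp.
  apply: (@L2_step (opL rhoW a) (fun q => (q.1, addeps q.2 a)) a (fun n => n%:R - a%:R) p p') => //.
  + by move=> n0 y; rewrite commL.
  + exact: TL.
  + exact: L1.
  apply: (IH (W2 p')) => //; rewrite -hN -h4 h3; move: (ltn_ord a); lia.
Qed.

Definition Tlist (p : ix) (u : V) : seq (ix * V) :=
  [:: ((subeps p.1 j, p.2), Acoef p *: ZV k u); ((p.1, subeps p.2 j), Bcoef p *: ZV k u)].

Lemma Tterm_S p u : Tterm p u = S (Tlist p u).
Proof. by rewrite /S /Tlist !big_cons big_nil addr0. Qed.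


Lemma assemble (c : ix -> V) (s : seq ix) (alpha : K) :
  (forall v, ZV n v = alpha *: v) ->
  exists tt, Z n (pbw_sum rhoW iota c s) - alpha *: pbw_sum rhoW iota c s = S tt /\
   (forall e, e \in tt -> (exists2 p, p \in s & e \in Tlist p (c p)) \/
        (exists2 p, p \in s & c p != 0 /\ (W2 e.1 + m + n < W2 p + k)%N)) /\
   (forall d', (forall p q, p \in s -> c p != 0 -> (W2 q + m + n < W2 p + k)%N -> q != d') ->
      gs d' tt = \sum_(p <- s) gs d' (Tlist p (c p))).
Proof.
move=> hZV; elim: s => [|p s [tt [e1 [e2 e3]]]].
  exists [::]; rewrite /pbw_sum big_nil (lin0 (linZn n)) scaler0 subr0 S_nil; split => //; split => //.
  by move=> d' _; rewrite big_nil /gs big_nil.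
have hF : Z n (mon p (iota (c p))) - alpha *: mon p (iota (c p)) =
          Z n (mon p (iota (c p))) - mon p (iota (ZV n (c p))).
  by rewrite hZV (linZ (moni_lin p)).
case: (eqVneq (c p) 0) => [c0|cn0].
  exists (Tlist p (c p) ++ tt); split.
    rewrite /pbw_sum big_cons (linD (linZn n)) scalerDr opprD addrACA -/(pbw_sum _ _ _ _).
    rewrite e1 S_cat hF -Tterm_S /Tterm c0 !(lin0 (linZV _)) !scaler0 !moni0 (lin0 (linZn n)).
    by rewrite !addr0 subrr.
  split.
    move=> e; rewrite mem_cat => /orP [et|et].
      by left; exists p => //; rewrite inE eqxx.
    case: (e2 e et) => [[q qs eq]|[q qs h]]; [left|right]; exists q => //; by rewrite inE qs orbT.
  move=> d' hd; rewrite gs_cat big_cons e3 // => q q0 qs; apply: hd; by rewrite inE qs orbT.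
have [tp [htp ep]] := L2 p (c p).
exists (Tlist p (c p) ++ tp ++ tt); split.
  rewrite /pbw_sum big_cons (linD (linZn n)) scalerDr opprD addrACA -/(pbw_sum _ _ _ _).
  rewrite e1 !S_cat hF ep -Tterm_S.
  move: (mon p (iota (ZV n (c p)))) (Tterm p (c p)) (S tp) (S tt) => A B C D.
  by rewrite (addrC A) -!addrA; congr (_ + _); rewrite addrCA addNKr.
split.
  move=> e; rewrite !mem_cat => /or3P [et|et|et].
  - by left; exists p => //; rewrite inE eqxx.
  - by right; exists p; [rewrite inE eqxx | split => //; case: (htp e et)].
  - case: (e2 e et) => [[q qs eq]|[q qs h]]; [left|right]; exists q => //; by rewrite inE qs orbT.
move=> d' hd; rewrite !gs_cat big_cons e3; last first.
  move=> q q0 qs; apply: hd; by rewrite inE qs orbT.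
rewrite [gs d' tp]big1_seq ?add0r ?addrA // => e /andP [_ et].
have [_ w] := htp e et.
by rewrite (negbTE (hd p e.1 (mem_head _ _) cn0 w)).
Qed.

Lemma Tlist_nz p u e : e \in Tlist p u -> e.2 != 0 -> u != 0 /\
  ((e = ((subeps p.1 j, p.2), Acoef p *: ZV k u) /\ (0 < p.1 j)%N) \/
   (e = ((p.1, subeps p.2 j), Bcoef p *: ZV k u) /\ (0 < p.2 j)%N)).
Proof.
rewrite !inE => /orP [/eqP ->|/eqP ->] /= hz; (split; first by apply: contraNneq hz => ->; rewrite (lin0 (linZV k)) scaler0).
  left; split => //; rewrite lt0n; apply: contraNneq hz => h0.
  by rewrite /Acoef h0 mulr0 oppr0 scale0r.
right; split => //; rewrite lt0n; apply: contraNneq hz => h0.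
by rewrite /Bcoef h0 mul0r scale0r.
Qed.

Lemma sum_single (A : nmodType) (s : seq ix) (F : ix -> A) (x : ix) : uniq s ->
  (forall p, p \in s -> p != x -> F p = 0) -> (x \notin s -> F x = 0) ->
  \sum_(p <- s) F p = F x.
Proof.
move=> us h1 h2; case: (boolP (x \in s)) => xs.
  rewrite (bigD1_seq x) //= big1_seq ?addr0 // => p /andP [px ps]; exact: h1.
rewrite h2 // big1_seq // => p /andP [_ ps]; apply: h1 => //.
by apply: contraNneq xs => <-.
Qed.

Hypothesis char0 : forall N : nat, (0 < N)%N -> (N%:R : K) != 0.

Lemma part1 (c : ix -> V) (s : seq ix) (h l : Nm m) (alpha_n alpha_k : K) :
  (forall v, ZV n v = alpha_n *: v) -> (forall v, ZV k v = alpha_k *: v) ->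
  alpha_k != 0 -> sigma != 0 ->
  uniq s -> fsupp c s -> c (h, l) != 0 ->
  (forall p, c p != 0 -> p = (h, l) \/ succ2 (h, l) p) -> (0 < h j)%N ->
  is_deg rhoW iota (Z n (pbw_sum rhoW iota c s) - alpha_n *: pbw_sum rhoW iota c s)
    (subeps h j, l).
Proof.
move=> hZn hZk ak0 sg0 us fs cd hb hj.
have [tt [e1 [e2 e3]]] := assemble c s hZn.
have Wd := W2_subeps1 (p := (h, l)) hj.
have jm : (j < m)%N := ltn_ord j.
have restlt : forall p q : ix, c p != 0 -> (W2 q + m + n < W2 p + k)%N ->
    (W2 q < W2 (subeps h j, l))%N.
  move=> p q cp; have := hb p cp; case=> [->|/succ2_W2]; rewrite -njk /=;
  move: Wd; move: (W2 _) (W2 _) (W2 _) => x y z; lia.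
have valid : forall (p : ix) (e : ix * V), p \in s -> e \in Tlist p (c p) -> e.2 != 0 ->
    e.1 = (subeps h j, l) \/ succ2 (subeps h j, l) e.1.
  move=> p e ps et en; have [cp [[-> pj]|[-> pj]]] := Tlist_nz et en; have hbp := hb p cp.
    exact: ord1A.
  by right; apply: ord1B.
rewrite e1; apply: (deg_of_list (t := tt)).
- by [].
- move=> e et en; case: (e2 e et) => [[p ps ept]|[p ps [cp w]]]; first exact: (valid p).
  by right; left; have := restlt p e.1 cp w.
have hne : forall p q : ix, p \in s -> c p != 0 -> (W2 q + m + n < W2 p + k)%N -> q != (subeps h j, l).
  by move=> p q _ cp w; apply/eqP => eq; have := restlt p q cp w; rewrite eq ltnn.
rewrite e3 //.
have dsol : h != subeps h j.
  apply/eqP => /ffunP /(_ j); rewrite subepsE eqxx /= => e; lia.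
rewrite (bigD1_seq (h, l)) //=; last first.
  by apply: contraNT cd => /fs /eqP.
rewrite big1_seq ?addr0; last first.
  move=> p /andP [pd ps]; rewrite /gs big1_seq // => e /andP [_ et].
  case: eqP => // ed; apply/eqP; apply: contraT => en.
  have [cp [[ee pj]|[ee pj]]] := Tlist_nz et en.
  - have := hb p cp; case=> [pe|sp]; first by move: pd; rewrite pe eqxx.
    have [ek|ek] := ord1A hj (or_intror sp) pj.
      move: ek => [/(subeps_inj pj hj) p1 p2]; move: pd; rewrite /= -p1 -p2.
      by case: (p) => ? ? /=; rewrite eqxx.
    by move: ek; rewrite -ed ee => /succ2_irr.
  - have := ord1B hj (hb p cp) pj; by rewrite -ed ee => /succ2_irr.
rewrite /gs /Tlist !big_cons big_nil /= eqxx.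
have -> : ((h, subeps l j) == (subeps h j, l)) = false.
  by apply/negbTE/negP => /eqP [hh _]; rewrite -hh eqxx in dsol.
rewrite ?addr0 ?add0r ?addr0 hZk scalerA /Acoef scaler_eq0 negb_or cd andbT.
rewrite mulf_neq0 // oppr_eq0 mulf_neq0 // char0 //.
Qed.

Lemma part2 (c : ix -> V) (s : seq ix) (l : Nm m) (alpha_n alpha_k : K) :
  (forall v, ZV n v = alpha_n *: v) -> (forall v, ZV k v = alpha_k *: v) ->
  uniq s -> fsupp c s -> c (zeroNm m, l) != 0 ->
  (forall p, c p != 0 -> p = (zeroNm m, l) \/ succ2 (zeroNm m, l) p) -> (0 < l j)%N ->
  (forall i : 'I_m, (j < i)%N -> l i = 0%N) ->
  (Bcoef (zeroNm m, l) * alpha_k) *: c (zeroNm m, l)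
     - (sigma * alpha_k) *: c (addeps (zeroNm m) j, subeps l j) != 0 ->
  is_deg rhoW iota (Z n (pbw_sum rhoW iota c s) - alpha_n *: pbw_sum rhoW iota c s)
    (zeroNm m, subeps l j).
Proof.
move=> hZn hZk us fs cd hb hj hz hnz.
set d := (zeroNm m, l); set d' := (zeroNm m, subeps l j).
set pst := (addeps (zeroNm m) j, subeps l j).
have [tt [e1 [e2 e3]]] := assemble c s hZn.
have Wd := W2_subeps2 (p := d) hj.
have jm : (j < m)%N := ltn_ord j.
have restlt : forall p q : ix, c p != 0 -> (W2 q + m + n < W2 p + k)%N -> (W2 q < W2 d')%N.
  move=> p q cp; have := hb p cp; case=> [->|/succ2_W2]; rewrite -njk /=;
  move: Wd; move: (W2 _) (W2 _) (W2 _) => x y z; lia.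
rewrite e1; apply: (deg_of_list (t := tt)).
- by [].
- move=> e et en; case: (e2 e et) => [[p ps ept]|[p ps [cp w]]].
    have [cp [[-> pj]|[-> pj]]] := Tlist_nz ept en; have hbp := hb p cp.
      exact: ord2A.
    exact: ord2B.
  by right; left; have := restlt p e.1 cp w.
have hne : forall p q : ix, p \in s -> c p != 0 -> (W2 q + m + n < W2 p + k)%N -> q != d'.
  by move=> p q _ cp w; apply/eqP => eq; have := restlt p q cp w; rewrite eq ltnn.
rewrite e3 //.
have gsE : forall p, gs d' (Tlist p (c p)) =
    (if (subeps p.1 j, p.2) == d' then Acoef p *: ZV k (c p) else 0) +
    (if (p.1, subeps p.2 j) == d' then Bcoef p *: ZV k (c p) else 0).
  by move=> p; rewrite /gs /Tlist !big_cons big_nil addr0.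
under eq_bigr do rewrite gsE.
rewrite big_split /=.
rewrite (@sum_single _ s (fun p => if (subeps p.1 j, p.2) == d' then Acoef p *: ZV k (c p) else 0) pst) //; last first.
- move=> pn; have -> : c pst = 0 by apply: fs.
  by rewrite (lin0 (linZV k)) scaler0; case: ifP.
- move=> p ps pp; case: eqP => // [[e1' e2']]; apply/eqP; apply: contraT => en.
  have pj : (0 < p.1 j)%N.
    rewrite lt0n; apply: contraNneq en => h0; by rewrite /Acoef h0 mulr0 oppr0 scale0r.
  move: pp; rewrite /pst -e2' -e1' subepsK //.
  by case: (p) => ? ? /=; rewrite eqxx.
rewrite (@sum_single _ s (fun p => if (p.1, subeps p.2 j) == d' then Bcoef p *: ZV k (c p) else 0) d) //; last first.
- by move=> dn; move: cd; rewrite (fs _ dn) eqxx.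
- move=> p ps pp; case: eqP => // [[e1' e2']]; apply/eqP; apply: contraT => en.
  have pj : (0 < p.2 j)%N.
    rewrite lt0n; apply: contraNneq en => h0; by rewrite /Bcoef h0 mul0r scale0r.
  move: pp; rewrite /d -(subeps_inj pj hj e2') -e1'.
  by case: (p) => ? ? /=; rewrite eqxx.
have hA : Acoef pst = - sigma.
  by rewrite /Acoef /pst /= addepsE zeroNmE eqxx add0n mulr1.
rewrite hA /pst /d /d' /= addepsK !eqxx addrC !hZk !scalerA.
by rewrite mulNr scaleNr.
Qed.
End L2.
End Main.

Lemma both_zero (K : numFieldType) (V : lmodType K) (B a b : K) (x y : V) :
  a != 0 -> b != 0 -> x != 0 ->
  (B * a) *: x - (1 * a) *: y = 0 -> (B * b) *: x - ((-1) * b) *: y = 0 -> B = 0.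
Proof.
move=> a0 b0 x0 h1 h2.
have e1 : B *: x = y.
  apply/eqP; rewrite -subr_eq0; move: h1; rewrite mul1r [B * a]mulrC -!scalerA -scalerBr.
  by move/eqP; rewrite scaler_eq0 (negbTE a0).
have e2 : B *: x + y = 0.
  apply/eqP; move: h2; rewrite mulN1r scaleNr opprK [B * b]mulrC -!scalerA -scalerDr.
  by move/eqP; rewrite scaler_eq0 (negbTE b0).
move: e2; rewrite -e1 -scalerDl => /eqP; rewrite scaler_eq0 (negbTE x0) orbF.
by rewrite -mulr2n mulrn_eq0 /= => /eqP.
Qed.

Unset Implicit Arguments.
Set Strict Implicit.

Theorem lemma3p6 (R : realType) (m : nat) (V W : lmodType R[i])
  (rhoV : GRep R[i] V) (rhoW : GRep R[i] W) (iota : V -> W)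
  (k : nat) (alpha beta : nat -> R[i]) (w : W) (h l : Nm m) :
  (0 < m)%N ->
  is_Grep m rhoV -> irreducible rhoV ->
  odd k -> (m - 1 <= k)%N ->
  (forall (j : nat) (v : V), (0 < j)%N ->
     [/\ opL rhoV (k + j - m)%N v = 0, opH rhoV (k + j - m)%N v = 0,
         opI rhoV (k + j)%N v = 0 & opJ rhoV (k + j)%N v = 0]) ->
  (forall (i : nat) (v : V), (i <= m - 1)%N ->
     opI rhoV (k - i)%N v = alpha (k - i)%N *: v /\ opJ rhoV (k - i)%N v = beta (k - i)%N *: v) ->
  alpha k * beta k != 0 ->
  is_induced m rhoV rhoW iota ->
  PBW_decomp m rhoW iota ->
  ~ (exists v : V, w = iota v) ->
  is_deg rhoW iota w (h, l) ->
  ((forall r : 'I_m, h r != 0%N -> (forall i : 'I_m, (i < r)%N -> h i = 0%N) ->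
      is_deg rhoW iota (opI rhoW (k - r)%N w - alpha (k - r)%N *: w) (subeps h r, l))
  /\
   (h = zeroNm m -> forall s : 'I_m, l s != 0%N ->
      (forall i : 'I_m, (s < i)%N -> l i = 0%N) ->
      is_deg rhoW iota (opI rhoW (k - s)%N w - alpha (k - s)%N *: w) (zeroNm m, subeps l s)
      \/ is_deg rhoW iota (opJ rhoW (k - s)%N w - beta (k - s)%N *: w) (zeroNm m, subeps l s))).
Proof.
move=> m0 GV _ oddk mk hvan hsc hab [_ [GW [[liota [_ _ hIo hJo _]] _]]] _ _ hdeg.
have linLW := lin_L GW; have linHW := lin_H GW.
have ZH_I : forall (a n : nat) y, opH rhoW a (opI rhoW n y) - opI rhoW n (opH rhoW a y)
    = 1 *: opI rhoW (a + n)%N y.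
  by move=> a n y; have := br_HI GW a n y; rewrite /comm add0n scale1r.
have ZH_J : forall (a n : nat) y, opH rhoW a (opJ rhoW n y) - opJ rhoW n (opH rhoW a y)
    = (-1) *: opJ rhoW (a + n)%N y.
  by move=> a n y; have := br_HJ GW a n y; rewrite /comm add0n scaleN1r.
have ZL_I : forall (a n : nat) y, opL rhoW a (opI rhoW n y) - opI rhoW n (opL rhoW a y)
    = (n%:R - a%:R) *: opI rhoW (a + n)%N y.
  by move=> a n y; have := br_LI GW a n y; rewrite /comm !add0n.
have ZL_J : forall (a n : nat) y, opL rhoW a (opJ rhoW n y) - opJ rhoW n (opL rhoW a y)
    = (n%:R - a%:R) *: opJ rhoW (a + n)%N y.
  by move=> a n y; have := br_LJ GW a n y; rewrite /comm !add0n.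
have Zio_I : forall n u, opI rhoW n (iota u) = iota (opI rhoV n u) by move=> n u; rewrite hIo.
have Zio_J : forall n u, opJ rhoW n (iota u) = iota (opJ rhoV n u) by move=> n u; rewrite hJo.
have Zvan_I : forall j u, (k < j)%N -> opI rhoV j u = 0.
  move=> j u kj; have := hvan (j - k)%N u; rewrite subn_gt0 subnKC ?(ltnW kj) //.
  by case/(_ kj).
have Zvan_J : forall j u, (k < j)%N -> opJ rhoV j u = 0.
  move=> j u kj; have := hvan (j - k)%N u; rewrite subn_gt0 subnKC ?(ltnW kj) //.
  by case/(_ kj).
have char0 : forall N : nat, (0 < N)%N -> (N%:R : R[i]) != 0.
  by move=> N hN; rewrite pnatr_eq0 -lt0n.
have [ak bk] : alpha k != 0 /\ beta k != 0.
  by move: hab; rewrite mulf_eq0 negb_or => /andP.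
have hIk : forall v, opI rhoV k v = alpha k *: v.
  by move=> v; have [] := hsc 0%N v (leq0n _); rewrite subn0.
have hJk : forall v, opJ rhoV k v = beta k *: v.
  by move=> v; have [] := hsc 0%N v (leq0n _); rewrite subn0.
have [c [s [us fs ew cd hb]]] := hdeg.
have hb' : forall p, c p != 0 -> p = (h, l) \/ succ2 (h, l) p by move=> p /hb.
have rk : forall r : 'I_m, (r <= k)%N.
  by move=> r; have := ltn_ord r; lia.
have rm : forall r : 'I_m, (r <= m - 1)%N.
  by move=> r; have := ltn_ord r; lia.
split.
  move=> r hr _; rewrite ew.
  apply: (part1 linLW linHW liota m0 (lin_I GW) (lin_I GV) Zio_I ZH_I ZL_I Zvan_I
           (j := r) (n := (k - r)%N) (subnK (rk r)) char0 (alpha_k := alpha k)) => //.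
  - by move=> v; have [] := hsc r v (rm r).
  - exact: oner_neq0.
  - by rewrite lt0n.
move=> h0 r hr hz; subst h; rewrite ew.
set B := Bcoef R[i] r (k - r)%N (zeroNm m, l).
set pst := (addeps (zeroNm m) r, subeps l r).
have hIn : forall v, opI rhoV (k - r)%N v = alpha (k - r)%N *: v.
  by move=> v; have [] := hsc r v (rm r).
have hJn : forall v, opJ rhoV (k - r)%N v = beta (k - r)%N *: v.
  by move=> v; have [] := hsc r v (rm r).
case: (eqVneq ((B * alpha k) *: c (zeroNm m, l) - (1 * alpha k) *: c pst) 0) => [uI|uI].
  case: (eqVneq ((B * beta k) *: c (zeroNm m, l) - ((-1) * beta k) *: c pst) 0) => [uJ|uJ].
    exfalso; have B0 := both_zero ak bk cd uI uJ.
    move: B0; rewrite /B /Bcoef /= => /eqP; rewrite mulf_eq0 pnatr_eq0 (negbTE hr) /=.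
    rewrite subr_eq0 eqr_nat => /eqP e.
    have kk : k = (r + r)%N by rewrite -{1}(subnK (rk r)) -e.
    by move: oddk; rewrite kk addnn odd_double.
  right; apply: (part2 linLW linHW liota m0 (lin_J GW) (lin_J GV) Zio_J ZH_J ZL_J Zvan_J
           (j := r) (n := (k - r)%N) (subnK (rk r)) (alpha_k := beta k)) => //.
  by rewrite lt0n.
left; apply: (part2 linLW linHW liota m0 (lin_I GW) (lin_I GV) Zio_I ZH_I ZL_I Zvan_I
           (j := r) (n := (k - r)%N) (subnK (rk r)) (alpha_k := alpha k)) => //.
by rewrite lt0n.
Qed.
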